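(* Let $r\ge1$ and let $\mu=\langle\mu_1,\dots,\mu_{r+1}\rangle\in\mathbb{Z}^{r+1}$ with $\mu_1+\cdots+\mu_{r+1}=0$. Then the map of the previous theorem (juggling sequence $\mapsto$ multiset of roots $\varepsilon_i-\varepsilon_{i+j}$, one for each throw at time $i$ to height $j$) is a bijection between $\mathrm{JS}(\langle\mu_1,\dots,\mu_r\rangle,\langle\mu_1+\cdots+\mu_r\rangle,r)$ and $P_{A_r}(\mu)$; in particular \[K_{A_r}(\mu)=\mathsf{js}(\langle\mu_1,\dots,\mu_r\rangle,\langle\mu_1+\cdots+\mu_r\rangle,r).\]
   Context: A (magic) juggling state is a finitely supported integer vector $\mathbf{s}=\langle s_1,s_2,\dots\rangle$ indexed by heights $1,2,\dots$ (trailing zeros omitted). A juggling sequence of length $n$ from $\mathbf{a}$ to $\mathbf{b}$ is a sequence $(\mathbf{s}_0,\dots,\mathbf{s}_n)$ with $\mathbf{s}_0=\mathbf{a}$, $\mathbf{s}_n=\mathbf{b}$, such that for each $1\le i\le n$ there are nonnegative integers $c^{(i)}_1,c^{(i)}_2,\dots$ (finitely many nonzero) with $\sum_k c^{(i)}_k=(\mathbf{s}_{i-1})_1$ and $(\mathbf{s}_i)_k=(\mathbf{s}_{i-1})_{k+1}+c^{(i)}_k$ for all $k\ge1$; $c^{(i)}_j$ is the number of throws at time $i$ to height $j$. $\mathrm{JS}(\mathbf{a},\mathbf{b},n)$ is the set of these, $\mathsf{js}(\mathbf{a},\mathbf{b},n)$ its cardinality. $\varepsilon_1,\dots,\varepsilon_{r+1}$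 is the standard basis of $\mathbb{R}^{r+1}$, $\Phi^+_{A_r}=\{\varepsilon_i-\varepsilon_j:1\le i<j\le r+1\}$, $P_{A_r}(\mu)$ is the set of finite multisets of elements of $\Phi^+_{A_r}$ summing to $\mu$ (empty multiset allowed for $\mu=0$), and $K_{A_r}(\mu)=|P_{A_r}(\mu)|$. *)

(* Defs.v *)
From HB Require Import structures.
From mathcomp Require Import all_boot all_order all_algebra.
Set Implicit Arguments. Unset Strict Implicit. Unset Printing Implicit Defensive.
Import Order.TTheory GRing.Theory Num.Theory.
Local Open Scope ring_scope.

(* A (magic) juggling state <s_1, s_2, ...> is represented by a function
   s : nat -> int with  s k = s_(k+1)  (the entry at height k.+1). *)
Definition state := nat -> int.

Definition finsupp_state (s : state) : Prop :=
  exists N : nat, forall k : nat, (N <= k)%N -> s k = 0.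

(* One juggling step from s to t: nonnegative throw counts c (c k = number
   of throws to height k.+1), finitely many nonzero, summing to s_1,
   with t_h = s_(h+1) + c_h for all heights h. *)
Definition juggling_step (s t : state) : Prop :=
  exists (c : nat -> nat) (N : nat),
    (forall k : nat, (N <= k)%N -> c k = 0%N) /\
    (\sum_(k < N) c k)%N%:Z = s 0%N /\
    (forall k : nat, t k = s k.+1 + (c k)%:Z).

Definition nth_state (ss : seq state) (i : nat) : state :=
  nth (fun _ => 0) ss i.

Definition is_js (a b : state) (n : nat) (ss : seq state) : Prop :=
  size ss = n.+1 /\ nth_state ss 0 = a /\ nth_state ss n = b /\
  (forall i : nat, (i < n)%N -> juggling_step (nth_state ss i) (nth_state ss i.+1)).

Definition eps (r : nat) (i : 'I_r.+1) : 'rV[int]_r.+1 := delta_mx 0 i.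

(* A finite multiset of positive roots of A_r: multiplicity function on pairs
   (p, q) (0-based), standing for eps_(p+1) - eps_(q+1); it must vanish
   outside p < q. *)
Definition mset (r : nat) := {ffun 'I_r.+1 * 'I_r.+1 -> nat}.

Definition in_P (r : nat) (mu : 'rV[int]_r.+1) (m : mset r) : Prop :=
  (forall pq : 'I_r.+1 * 'I_r.+1, ~~ (pq.1 < pq.2)%N -> m pq = 0%N) /\
  \sum_(pq : 'I_r.+1 * 'I_r.+1) (eps pq.1 - eps pq.2) *+ m pq = mu.

(* The map: one root eps_i - eps_(i+j) for each throw at time i to height j.
   Time i = p+1, height j = q-p; the number of such throws is
   c^(i)_j = (s_i)_j - (s_(i-1))_(j+1). *)
Definition js_to_mset (r : nat) (ss : seq state) : mset r :=
  [ffun pq : 'I_r.+1 * 'I_r.+1 =>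
     if (pq.1 < pq.2)%N then
       `| nth_state ss pq.1.+1 (pq.2 - pq.1).-1 - nth_state ss pq.1 (pq.2 - pq.1) |%N
     else 0%N].

Definition init_state (r : nat) (mu : 'rV[int]_r.+1) : state :=
  fun k => if (k < r)%N then mu 0 (inord k) else 0.

Definition final_state (r : nat) (mu : 'rV[int]_r.+1) : state :=
  fun k => if k == 0%N then \sum_(i < r.+1 | (i < r)%N) mu 0 i else 0.

Definition has_card (T : Type) (A : T -> Prop) (N : nat) : Prop :=
  exists f : 'I_N -> T, injective f /\ (forall x, A x <-> exists i, f i = x).

(* Main.v *)
Require Import Defs.
From HB Require Import structures.
From mathcomp Require Import all_boot all_order all_algebra.
From Stdlib Require Import FunctionalExtensionality.
From mathcomp Require Import zify.
Import Order.TTheory GRing.Theory Num.Theory.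
Local Open Scope ring_scope.

Module Aux.
Set Implicit Arguments. Unset Strict Implicit. Unset Printing Implicit Defensive.

Definition MM (r : nat) (m : mset r) (p q : nat) : nat :=
  if ((p < q) && (q <= r))%N then m (inord p, inord q) else 0%N.

Fixpoint st (r : nat) (mu : 'rV[int]_r.+1) (m : mset r) (i : nat) : state :=
  match i with
  | 0 => init_state mu
  | i.+1 => fun k => @st r mu m i k.+1 + (MM m i (i + k)%N.+1)%:Z
  end.

Arguments st {r} mu m i.
Definition inS r (m : mset r) (j : nat) : nat := (\sum_(p < j) MM m p j)%N.
Definition outS r (m : mset r) (i : nat) : nat := (\sum_(q < r.+1) MM m i q)%N.

Lemma st_closed r mu (m : mset r) i k :
  st mu m i k = init_state mu (k + i)%N + (\sum_(p < i) MM m p (k + i)%N)%N%:Z.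
Proof.
elim: i k => [|i IH] k /=.
  by rewrite big_ord0 addr0 addn0.
rewrite IH big_ord_recr /= PoszD addrA.
by rewrite addSn addnS (addnC i k).
Qed.

Lemma sum_ext (F : nat -> nat) n m : (n <= m)%N ->
  (forall k, (n <= k)%N -> (k < m)%N -> F k = 0%N) ->
  (\sum_(k < m) F k)%N = (\sum_(k < n) F k)%N.
Proof.
move=> nm H; rewrite -!(big_mkord xpredT) (@big_cat_nat _ _ _ n) //=.
rewrite [X in (_ + X)%N]big1_seq ?addn0 // => k /andP[_].
by rewrite mem_index_iota => /andP[] /H.
Qed.

Definition zoff r (m : mset r) := forall pq : 'I_r.+1 * 'I_r.+1, ~~ (pq.1 < pq.2)%N -> m pq = 0%N.

Lemma MM0 r (m : mset r) p q : ~~ ((p < q) && (q <= r))%N -> MM m p q = 0%N.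
Proof. by rewrite /MM => /negbTE ->. Qed.

Lemma MM_ord r (m : mset r) (p q : 'I_r.+1) : zoff m -> MM m p q = m (p, q).
Proof.
move=> z; rewrite /MM (leq_ord q) andbT !inord_val.
by case: ifP => // /negbT /(z (p, q)).
Qed.

Lemma outS_ord r (m : mset r) (j : 'I_r.+1) : zoff m ->
  outS m j = (\sum_(q : 'I_r.+1) m (j, q))%N.
Proof. by move=> z; apply: eq_bigr => q _; rewrite MM_ord. Qed.

Lemma inS_ord r (m : mset r) (j : 'I_r.+1) : zoff m ->
  inS m j = (\sum_(p : 'I_r.+1) m (p, j))%N.
Proof.
move=> z; rewrite /inS -(@sum_ext (fun p => MM m p j) j r.+1) 1?ltnW //.
  by apply: eq_bigr => p _; rewrite MM_ord.
by move=> k jk _; rewrite MM0 // negb_and -leqNgt jk.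
Qed.

Lemma outS_thr r (m : mset r) i :
  outS m i = (\sum_(k < r) MM m i (i + k)%N.+1)%N.
Proof.
rewrite /outS -(@sum_ext (MM m i) r.+1 (i.+1 + r)); last first.
- by move=> k rk _; rewrite MM0 //; apply/nandP; right; rewrite -ltnNge.
- by rewrite addSn ltnS leq_addl.
rewrite -!(big_mkord xpredT) (@big_cat_nat _ _ _ i.+1) //= ?leq_addr //.
rewrite big1_seq ?add0n; last first.
  by move=> k /andP[_]; rewrite mem_index_iota => /andP[_ ki]; rewrite MM0 // negb_and -leqNgt -ltnS ki.
rewrite -{1}(add0n i.+1) big_addn addKn big_mkord.
by apply: eq_bigr => k _; rewrite addnS addnC.
Qed.

Lemma entry r (m : mset r) (j : 'I_r.+1) : zoff m ->
  (\sum_(pq : 'I_r.+1 * 'I_r.+1) (eps pq.1 - eps pq.2) *+ m pq) 0 j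
   = (outS m j)%:Z - (inS m j)%:Z.
Proof.
move=> z; rewrite outS_ord // inS_ord // summxE.
under eq_bigr => pq _ do rewrite mulmxnE !mxE eqxx /= mulrnBl.
rewrite sumrB; congr (_ - _).
  rewrite (eq_bigr (fun pq => (j == pq.1)%:R *+ m (pq.1, pq.2))); last by case.
  rewrite -(pair_bigA _ (fun p q => (j == p)%:R *+ m (p, q))) /=.
  rewrite (bigD1 j) //= [X in _ + X]big1 ?addr0; last first.
    by move=> p pj; apply: big1 => q _; rewrite eq_sym (negbTE pj) mul0rn.
  by rewrite -natz natr_sum; apply: eq_bigr => q _; rewrite eqxx.
rewrite (eq_bigr (fun pq => (j == pq.2)%:R *+ m (pq.1, pq.2))); last by case.
rewrite -(pair_bigA _ (fun p q => (j == q)%:R *+ m (p, q))) /=.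
rewrite -natz natr_sum; apply: eq_bigr => p _.
rewrite (bigD1 j) //= big1 ?addr0 ?eqxx //.
by move=> q pj; rewrite eq_sym (negbTE pj) mul0rn.
Qed.

Lemma inP_iff r (mu : 'rV[int]_r.+1) (m : mset r) : zoff m ->
  in_P mu m <-> forall j : 'I_r.+1, mu 0 j = (outS m j)%:Z - (inS m j)%:Z.
Proof.
move=> z; split.
  by case=> _ H j; rewrite -H entry.
move=> H; split => //; apply/matrixP => i j.
by rewrite ord1 entry // H.
Qed.

Lemma init_ge r (mu : 'rV[int]_r.+1) k : (r <= k)%N -> init_state mu k = 0.
Proof. by rewrite /init_state leqNgt => /negbTE ->. Qed.

Lemma st_0 r mu (m : mset r) i : st mu m i 0 = init_state mu i + (inS m i)%:Z.
Proof. by rewrite st_closed add0n. Qed.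

Lemma st_r_pos r mu (m : mset r) k : (0 < k)%N -> st mu m r k = 0.
Proof.
move=> k0; rewrite st_closed init_ge ?leq_addl // add0r big1 // => p _.
rewrite MM0 //; apply/nandP; right; rewrite -ltnNge.
by rewrite -{1}(add0n r) ltn_add2r.
Qed.

Lemma step_iff r mu (m : mset r) i :
  juggling_step (st mu m i) (st mu m i.+1) <-> (outS m i)%:Z = st mu m i 0.
Proof.
split.
  case=> c [N [Hz [Hs Ht]]].
  have Hc : forall k, c k = MM m i (i + k).+1.
    move=> k; move: (Ht k) => /= /addrI; by case.
  rewrite -Hs outS_thr; congr Posz.
  rewrite -(@sum_ext c N (N + r)) ?leq_addr //; last by move=> k Nk _; apply: Hz.
  rewrite (@sum_ext c r (N + r)) ?leq_addl //; last first.
    move=> k rk _; rewrite Hc MM0 //; apply/nandP; right; rewrite -ltnNge ltnS.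
    exact: leq_trans rk (leq_addl _ _).
  by apply: eq_bigr => k _; rewrite Hc.
move=> H; exists (fun k => MM m i (i + k).+1), r; split; last split.
- move=> k rk; rewrite MM0 //; apply/nandP; right; rewrite -ltnNge ltnS.
  exact: leq_trans rk (leq_addl _ _).
- by rewrite -outS_thr.
- by [].
Qed.

Definition ss_of r mu (m : mset r) : seq state := mkseq (st mu m) r.+1.

Lemma nth_ss_of r mu (m : mset r) i : (i <= r)%N -> nth_state (ss_of mu m) i = st mu m i.
Proof. by move=> ir; rewrite /nth_state nth_mkseq. Qed.

Lemma outS_r r (m : mset r) : outS m r = 0%N.
Proof.
apply: big1 => q _; rewrite MM0 //; apply/negP => /andP[a b].
by rewrite ltnNge b in a.
Qed.

Lemma js_iff r mu (m : mset r) :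
  is_js (init_state mu) (final_state mu) r (ss_of mu m) <->
  (forall i, (i < r)%N -> (outS m i)%:Z = st mu m i 0) /\
  (inS m r)%:Z = \sum_(i < r.+1 | (i < r)%N) mu 0 i.
Proof.
split.
  case=> _ [_ [Hb Hs]]; split.
    move=> i ir; apply/step_iff; move: (Hs i ir).
    by rewrite !nth_ss_of // ltnW.
  move: Hb; rewrite nth_ss_of // => /(congr1 (fun f => f 0%N)).
  by rewrite st_0 init_ge // add0r /final_state /=.
case=> H1 H2; split; first by rewrite size_mkseq.
split; first by rewrite nth_ss_of.
split.
  rewrite nth_ss_of //; apply: functional_extensionality => -[|k].
    by rewrite st_0 init_ge // add0r H2.
  by rewrite st_r_pos.
move=> i ir; rewrite !nth_ss_of // ?(ltnW ir) //; exact/step_iff/H1.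
Qed.

Lemma sum_lt_r r (mu : 'rV[int]_r.+1) : \sum_(i < r.+1) mu 0 i = 0 ->
  \sum_(i < r.+1 | (i < r)%N) mu 0 i = - mu 0 ord_max.
Proof.
rewrite (bigID (fun i : 'I_r.+1 => (i < r)%N)) /= [X in _ + X](big_pred1 ord_max).
  by move/eqP; rewrite addr_eq0 => /eqP.
move=> i /=; rewrite -leqNgt.
apply/idP/eqP => [h|->] //; apply: val_inj; apply/eqP; by rewrite /= eqn_leq h -ltnS ltn_ord.
Qed.

Lemma inP_js r (mu : 'rV[int]_r.+1) (m : mset r) : \sum_(i < r.+1) mu 0 i = 0 -> zoff m ->
  in_P mu m <-> is_js (init_state mu) (final_state mu) r (ss_of mu m).
Proof.
move=> hmu z; apply: (iff_trans (inP_iff mu z)).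
apply: iff_sym; apply: (iff_trans (js_iff mu m)); apply: iff_sym.
rewrite sum_lt_r //; split.
  move=> H; split.
    move=> i ir; rewrite st_0 /init_state ir.
    move: (H (@inord r i)); rewrite inordK; last by rewrite ltnS ltnW.
    move=> ->.
    by rewrite subrK.
  have := H ord_max; rewrite /= outS_r sub0r => ->.
  by rewrite opprK.
case=> H1 H2 j.
have [jr|] := ltnP j r.
  move: (H1 j jr); rewrite st_0 /init_state jr inord_val => ->.
  by rewrite addrK.
move=> rj; have -> : j = ord_max.
  by apply: val_inj; apply/eqP; rewrite /= eqn_leq rj -ltnS ltn_ord.
by rewrite /= outS_r H2 opprK add0r.
Qed.

Lemma st_S r mu (m : mset r) i k :
  st mu m i.+1 k = st mu m i k.+1 + (MM m i (i + k)%N.+1)%:Z.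
Proof. by []. Qed.

Lemma F_G r (mu : 'rV[int]_r.+1) (m : mset r) : zoff m -> js_to_mset r (ss_of mu m) = m.
Proof.
move=> z; apply/ffunP => -[p q]; rewrite ffunE.
case: ifP => pq; last by rewrite z //= pq.
rewrite (@nth_ss_of r mu m (p,q).1.+1); last exact: leq_trans pq (leq_ord q).
rewrite (@nth_ss_of r mu m (p,q).1); last exact: leq_ord.
rewrite st_S /=; rewrite /= in pq.
have hk : ((q - p).-1).+1 = (q - p)%N by rewrite prednK // subn_gt0.
rewrite hk addrAC subrr add0r /=.
have -> : (p + (q - p).-1).+1 = q by rewrite -addnS hk subnKC // ltnW.
by rewrite MM_ord.
Qed.

Lemma zoff_F r (ss : seq state) : zoff (js_to_mset r ss).
Proof. by move=> pq /negbTE h; rewrite ffunE h. Qed.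


Lemma js_G r (mu : 'rV[int]_r.+1) (ss : seq state) :
  is_js (init_state mu) (final_state mu) r ss -> ss = ss_of mu (js_to_mset r ss).
Proof.
case=> Hsz [H0 [Hr Hst]].
set s := nth_state ss.
have D : forall i k, (i < r)%N -> s i k.+1 <= s i.+1 k.
  move=> i k ir; case: (Hst i ir) => c [N [_ [_ Ht]]].
  by rewrite /s Ht lerDl.
have mono : forall d i k, (i + d <= r)%N -> s i (k + d)%N <= s (i + d)%N k.
  elim=> [|d IH] i k idr; first by rewrite !addn0.
  rewrite addnS -addSn.
  apply: (le_trans (IH i k.+1 _)); first by apply: leq_trans idr; rewrite leq_add2l.
  by rewrite addnS; apply: D; rewrite -addnS.
have low : forall i k, (i <= r)%N -> (r <= k + i)%N -> 0 <= s i k.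
  move=> i k ir rki; have := mono i 0%N k; rewrite add0n => /(_ ir).
  by rewrite {1}/s H0 init_ge.
have fin : forall k, (0 < k)%N -> s r k = 0.
  by move=> k k0; rewrite /s Hr /final_state; case: k k0.
have van : forall i k, (i < r)%N -> (r <= i + k)%N -> s i.+1 k = s i k.+1.
  move=> i k ir rik; apply/eqP; rewrite eq_le D // andbT.
  have := mono (r - i.+1)%N i.+1 (k - (r - i.+1))%N; rewrite subnKC // => /(_ (leqnn r)).
  have hk : (0 < k - (r - i.+1))%N by clear -ir rik; lia.
  have hk2 : (r - i.+1 <= k)%N by clear -ir rik; lia.
  rewrite fin // subnK //.
  move=> h; apply: le_trans h _; apply: low; first exact: ltnW.
  by rewrite addSn -addnS addnC ltnW.
have main : forall i, (i <= r)%N -> s i = st mu (js_to_mset r ss) i.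
  elim=> [_|i IH ir]; first by rewrite /s H0.
  apply: functional_extensionality => k; rewrite st_S -IH; last exact: ltnW.
  case: (leqP (i + k).+1 r) => h.
    rewrite /MM ifT; last by rewrite ltnS leq_addr h.
    rewrite ffunE [(_, _).1]/= [(_, _).2]/= !inordK; last (by rewrite ltnS ltnW); last by rewrite ltnS.
    rewrite ifT; last by rewrite ltnS leq_addr.
    have -> : ((i + k).+1 - i)%N = k.+1 by rewrite -addnS addKn.
    rewrite gez0_abs; last by rewrite subr_ge0 D.
    change (s i.+1 k = s i k.+1 + (s i.+1 k - s i k.+1)).
    by rewrite addrC subrK.
  rewrite MM0; last by apply/nandP; right; rewrite -ltnNge.
  by rewrite addr0 van // -ltnS.
apply: (@eq_from_nth _ (fun _ => 0)); first by rewrite size_mkseq.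
move=> i; rewrite Hsz ltnS => ir.
have := main i ir; rewrite /s /nth_state => ->.
by rewrite nth_mkseq.
Qed.

End Aux.
Import Aux.

Theorem mainTheorem4 (r : nat) (hr : (1 <= r)%N) (mu : 'rV[int]_r.+1)
  (hmu : \sum_(i < r.+1) mu 0 i = 0) :
  let a := init_state mu in
  let b := final_state mu in
  (forall ss, is_js a b r ss -> in_P mu (js_to_mset r ss)) /\
  (forall ss1 ss2, is_js a b r ss1 -> is_js a b r ss2 ->
     js_to_mset r ss1 = js_to_mset r ss2 -> ss1 = ss2) /\
  (forall m : mset r, in_P mu m -> exists2 ss, is_js a b r ss & js_to_mset r ss = m) /\
  (forall N : nat, has_card (is_js a b r) N <-> has_card (in_P mu) N).
Proof.
move=> a b; rewrite /a /b {a b}.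
have P1 : forall ss, is_js (init_state mu) (final_state mu) r ss -> in_P mu (js_to_mset r ss).
  move=> ss H; apply: (proj2 (inP_js hmu (@zoff_F r ss))).
  by rewrite -(js_G H).
have P2 : forall ss1 ss2, is_js (init_state mu) (final_state mu) r ss1 ->
    is_js (init_state mu) (final_state mu) r ss2 ->
     js_to_mset r ss1 = js_to_mset r ss2 -> ss1 = ss2.
  by move=> ss1 ss2 H1 H2 E; rewrite (js_G H1) (js_G H2) E.
have P3 : forall m : mset r, in_P mu m ->
    is_js (init_state mu) (final_state mu) r (ss_of mu m) /\ js_to_mset r (ss_of mu m) = m.
  move=> m H; split; first exact: (proj1 (inP_js hmu H.1)).
  exact: F_G H.1.
split => //; split => //; split.
  by move=> m /P3 [H1 H2]; exists (ss_of mu m).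
move=> N; split.
  case=> f [finj Hf]; exists (fun i => js_to_mset r (f i)); split.
    move=> i j E; apply: finj; apply: P2 => //.
      by apply/Hf; exists i.
    by apply/Hf; exists j.
  move=> x; split.
    move=> /P3 [H1 H2]; have [i Ei] := (Hf (ss_of mu x)).1 H1.
    by exists i; rewrite Ei.
  case=> i <-; apply: P1; apply/Hf; by exists i.
case=> g [ginj Hg]; exists (fun i => ss_of mu (g i)); split.
  move=> i j E; apply: ginj.
  have Hi : in_P mu (g i) by apply/Hg; exists i.
  have Hj : in_P mu (g j) by apply/Hg; exists j.
  by rewrite -(F_G mu Hi.1) -(F_G mu Hj.1) E.
move=> x; split.
  move=> H; have [i Ei] := (Hg (js_to_mset r x)).1 (P1 _ H).
  by exists i; rewrite Ei -(js_G H).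
case=> i <-; apply: (P3 _ _).1; apply/Hg; by exists i.
Qed.
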